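(* Let $b>0$ and let $A_1,\dots,A_n$ and $L_1,\dots,L_n$ be finite linear orders, with $A_1,\dots,A_n$ non-empty. There is a finite linear order $I$ with the following property. Consider a coloring with $b$ colors of all $n$-tuples $(s_1,\dots,s_n)$ such that (i) $s_1\colon A_1\oplus (L_1\times I)^y\to A_1\oplus 1$, for some $y\in L_1\times I$, is a sealed $A_1$-rigid surjection, and (ii) for $2\leq i\leq n$, $s_i\colon A_i\oplus (L_i\times I)\to A_i$ is an $A_i$-rigid surjection. Then there exist functions $p_i\colon A_i\oplus (L_i\times I)\to A_i\oplus L_i$, $1\leq i\leq n$, each with property (P) (for $A=A_i$, $L=L_i$), such that for each $x\in L_1$, each sealed $A_1$-rigid surjection $r_1\colon A_1\oplus L_1^x\to A_1\oplus 1$ and all $A_i$-rigid surjections $r_i\colon A_i\oplus L_i\to A_i$, $2\leq i\leq n$, the color of \[ (r_1\circ p_1^x,\ r_2\circ p_2,\ \dots,\ r_n\circ p_n) \] depends only on $x$.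
   Context: For linear orders $A$ and $L$, $A\oplus L$ is the linear order on the disjoint union with $L$ placed on top of $A$; $A\oplus 1$ is $A$ with one new top element added. $L\times I$ carries the lexicographic order. For a linear order $J$ and $x\in J$, $J^x=\{y\in J\mid y\leq_J x\}$. A function $p\colon A\oplus(L\times I)\to A\oplus L$ has property (P) if $p\upharpoonright A={\rm id}_A$ and for every $x\in L$, $x\in p[\{x\}\times I]\subseteq A\cup\{x\}$. For such $p$ and $x\in L$, $p^x$ denotes the restriction of $p$ to $\{z\in A\oplus(L\times I)\mid z\leq \min p^{-1}(x)\}$. An $A$-rigid surjection from $A\oplus J$ to $A$ (with $J$ a linear order) is any function that is the identity on $A$. A sealed $A$-rigid surjection from $A\oplus J^x$ to $A\oplus 1$ is a function that is the identity on $A$, maps $x$ (the largest element) to the top element of $A\oplus 1$, and maps all other elements of $J^x$ into $A$. *)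

(* Defs.v *)
From mathcomp Require Import all_boot all_order.
Set Implicit Arguments. Unset Strict Implicit. Unset Printing Implicit Defensive.

(* Finite linear orders are represented by ordinals 'I_k with the usual order.
   A (+) J is the sum type A + J, with A placed below J. *)

Definition sum_le {A B : Type} (leA : rel A) (leB : rel B) (z w : A + B) : bool :=
  match z, w with
  | inl u, inl v => leA u v
  | inl _, inr _ => true
  | inr _, inl _ => false
  | inr u, inr v => leB u v
  end.

Definition ord_le {k : nat} (u v : 'I_k) : bool := (u <= v)%N.

Definition lex_le {l m : nat} (y y' : 'I_l * 'I_m) : bool :=
  (y.1 < y'.1)%N || ((y.1 == y'.1) && (y.2 <= y'.2)%N).

Definition leALI {a l m : nat} : rel ('I_a + ('I_l * 'I_m)) :=
  sum_le ord_le lex_le.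

Definition leAL {a l : nat} : rel ('I_a + 'I_l) := sum_le ord_le ord_le.

Definition propP {a l m : nat} (p : {ffun 'I_a + ('I_l * 'I_m) -> 'I_a + 'I_l}) : Prop :=
  (forall u : 'I_a, p (inl u) = inl u) /\
  (forall x : 'I_l,
     (exists i : 'I_m, p (inr (x, i)) = inr x) /\
     (forall i : 'I_m, match p (inr (x, i)) with
                       | inl _ => true
                       | inr x' => x' == x
                       end)).

Definition is_min_preimage {a l m : nat}
  (p : {ffun 'I_a + ('I_l * 'I_m) -> 'I_a + 'I_l}) (x : 'I_l) (y0 : 'I_l * 'I_m) : Prop :=
  p (inr y0) = inr x /\ (forall z, p z = inr x -> leALI (inr y0) z).

Definition rigid {a : nat} {J : finType} (s : {ffun 'I_a + J -> 'I_a}) : Prop :=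
  forall u : 'I_a, s (inl u) = u.

(* A (+) 1 is represented by option 'I_a, with None the new top element.
   Sealed A-rigid surjection A (+) L^x -> A (+) 1, represented by a total
   function on A (+) L of which only the values on A (+) L^x matter. *)
Definition sealed_L {a l : nat} (x : 'I_l) (r : {ffun 'I_a + 'I_l -> option 'I_a}) : Prop :=
  (forall u : 'I_a, r (inl u) = Some u) /\ r (inr x) = None /\
  (forall x' : 'I_l, (x' < x)%N -> r (inr x') <> None).

(* Canonical representation of a function with domain A (+) (L x I)^y :
   the pair (y, f) where f is the total function agreeing with the given one
   on A (+) (L x I)^y and equal to None elsewhere. *)
Definition trunc {a l m : nat} (y : 'I_l * 'I_m)
  (f : 'I_a + ('I_l * 'I_m) -> option 'I_a) : {ffun 'I_a + ('I_l * 'I_m) -> option 'I_a} :=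
  [ffun z => if leALI z (inr y) then f z else None].

(* Main.v *)
Require Import Defs.
From mathcomp Require Import all_boot all_order.
From Stdlib Require Import FunctionalExtensionality.
From mathcomp Require Import zify.
Set Implicit Arguments. Unset Strict Implicit. Unset Printing Implicit Defensive.

Section Words.
Variable A : finType.
Definition word N := {ffun 'I_N -> A}.
Definition vword N := {ffun 'I_N -> option A}.
Definition isvar N (w : vword N) := exists j, w j = None.
Definition subw N (w : vword N) (a : A) : word N := [ffun j => odflt a (w j)].
Definition HJ (C : finType) := exists N, forall chi : word N -> C,
  exists w : vword N, isvar w /\ forall a a', chi (subw w a) = chi (subw w a').
End Words.

Definition catf (B : Type) n1 n2 (f : {ffun 'I_n1 -> B}) (g : {ffun 'I_n2 -> B}) :
  {ffun 'I_(n1 + n2) -> B} :=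
  [ffun j => match split j with inl j1 => f j1 | inr j2 => g j2 end].

Lemma sub_cat (A : finType) n1 n2 (w1 : vword A n1) (w2 : vword A n2) a :
  subw (catf w1 w2) a = catf (subw w1 a) (subw w2 a).
Proof. by apply/ffunP => j; rewrite !ffunE; case: (split j) => j'; rewrite ffunE. Qed.

Lemma var_catl (A : finType) n1 n2 (w1 : vword A n1) (w2 : vword A n2) :
  isvar w1 -> isvar (catf w1 w2).
Proof. case=> j hj; exists (lshift n2 j); by rewrite ffunE (unsplitK (inl j)). Qed.

Lemma var_catr (A : finType) n1 n2 (w1 : vword A n1) (w2 : vword A n2) :
  isvar w2 -> isvar (catf w1 w2).
Proof. case=> j hj; exists (rshift n1 j); by rewrite ffunE (unsplitK (inr j)). Qed.

Definition constw (A : finType) N (u : word A N) : vword A N := [ffun j => Some (u j)].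
Lemma sub_const (A : finType) N (u : word A N) a : subw (constw u) a = u.
Proof. by apply/ffunP => j; rewrite !ffunE. Qed.

Definition mono (A C : finType) N (chi : word A N -> C) :=
  exists L : vword A N, isvar L /\ forall a a', chi (subw L a) = chi (subw L a').

Section Step.
Variable k : nat.
Hypothesis IH : forall C : finType, HJ 'I_k.+1 C.
Let wl : 'I_k.+1 -> 'I_k.+2 := widen_ord (leqnSn _).
Let top : 'I_k.+2 := ord_max.

Lemma wl_or_top (a : 'I_k.+2) : a = top \/ exists b, a = wl b.
Proof.
case: (ltnP a k.+1) => h.
  by right; exists (Ordinal h); apply: val_inj.
left; apply: val_inj => /=; have := ltn_ord a; rewrite /top /=; lia.
Qed.

Definition liftw N (L : vword 'I_k.+1 N) : vword 'I_k.+2 N := [ffun j => omap wl (L j)].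
Definition mapw N (u : word 'I_k.+1 N) : word 'I_k.+2 N := [ffun j => wl (u j)].
Lemma sub_liftw N (L : vword 'I_k.+1 N) a : subw (liftw L) (wl a) = mapw (subw L a).
Proof. by apply/ffunP => j; rewrite !ffunE; case: (L j). Qed.

Lemma FL (C : finType) s : exists N, forall chi : word 'I_k.+2 N -> C,
  mono chi \/ exists (f : word 'I_k.+2 N) (D : {set C}), #|D| = s /\
   forall c, c \in D -> exists L : vword 'I_k.+2 N, isvar L /\ subw L top = f /\
      forall a, chi (subw L (wl a)) = c.
Proof.
elim: s => [|s [Ns HNs]].
  exists 0 => chi; right; exists [ffun _ => top], set0; split; first by rewrite cards0.
  by move=> c; rewrite inE.
have [N' HN'] := IH {ffun word 'I_k.+2 Ns -> C}.
exists (Ns + N') => chi.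
pose chi' (v : word 'I_k.+1 N') : {ffun word 'I_k.+2 Ns -> C} :=
  [ffun u => chi (catf u (mapw v))].
have [L' [varL' HL']] := HN' chi'.
pose v0 := mapw (subw L' ord0).
pose psi (u : word 'I_k.+2 Ns) := chi (catf u v0).
have key : forall u a, chi (catf u (subw (liftw L') (wl a))) = psi u.
  move=> u a; rewrite sub_liftw /psi /v0.
  have := congr1 (fun F : {ffun word 'I_k.+2 Ns -> C} => F u) (HL' a ord0).
  by rewrite /= !ffunE.
case: (HNs psi) => [[L [varL HL]] | [f [D [cD HD]]]].
  left; exists (catf L (constw v0)); split; first exact: var_catl.
  by move=> a a'; rewrite !sub_cat !sub_const; apply: HL.
case Dc: (psi f \in D).
  have [L [varL [Lt HL]]] := HD _ Dc.
  left; exists (catf L (constw v0)); split; first exact: var_catl.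
  have allc : forall a, chi (subw (catf L (constw v0)) a) = psi f.
    move=> a; rewrite sub_cat sub_const; case: (wl_or_top a) => [->|[b ->]].
      by rewrite Lt.
    exact: HL.
  by move=> a a'; rewrite !allc.
right; exists (catf f (subw (liftw L') top)), (psi f |: D); split.
  by rewrite cardsU1 Dc cD.
move=> c; rewrite !inE => /orP [/eqP ->|cD'].
  exists (catf (constw f) (liftw L')); split; first apply: var_catr.
    by case: varL' => j hj; exists j; rewrite ffunE hj.
  by split; [rewrite sub_cat sub_const | move=> a; rewrite sub_cat sub_const key].
have [L [varL [Lt HL]]] := HD _ cD'.
exists (catf L (liftw L')); split; first exact: var_catl.
split; first by rewrite sub_cat Lt.
by move=> a; rewrite sub_cat key HL.
Qed.

Lemma HJ_step (C : finType) : HJ 'I_k.+2 C.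
Proof.
have [N HN] := FL C #|C|.
exists N => chi; case: (HN chi) => [//|[f [D [cD HD]]]].
have DT : D = setT.
  by apply/eqP; rewrite eqEcard subsetT cardsT cD leqnn.
have [L [varL [Lt HL]]] : exists L, isvar L /\ subw L top = f /\ forall a, chi (subw L (wl a)) = chi f.
  by apply: HD; rewrite DT inE.
exists L; split=> //.
have allc : forall a, chi (subw L a) = chi f.
  by move=> a; case: (wl_or_top a) => [->|[b ->]]; [rewrite Lt | apply: HL].
by move=> a a'; rewrite !allc.
Qed.
End Step.

Lemma HJ_ord k (C : finType) : HJ 'I_k C.
Proof.
have base : forall C : finType, HJ 'I_1 C.
  move=> C'; exists 1 => chi; exists [ffun _ => None]; split.
    by exists ord0; rewrite ffunE.
  by move=> a a'; rewrite (ord1 a) (ord1 a').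
case: k C => [|k] C.
  exists 1 => chi; exists [ffun _ => None]; split; first by exists ord0; rewrite ffunE.
  by case.
elim: k C => [|k IH] C; first exact: base.
exact: HJ_step.
Qed.


Lemma HJ_fin (A C : finType) : HJ A C.
Proof.
have [N HN] := HJ_ord #|A| C.
exists N => chi.
pose chi' (u : word 'I_#|A| N) := chi [ffun j => enum_val (u j)].
have [w [[j hj] Hw]] := HN chi'.
exists [ffun j => omap enum_val (w j)]; split; first by exists j; rewrite ffunE hj.
have E : forall a, subw [ffun j => omap enum_val (w j)] a =
    [ffun j => enum_val (subw w (enum_rank a) j)].
  by move=> a; apply/ffunP => i; rewrite !ffunE; case: (w i) => //=; rewrite enum_rankK.
by move=> a a'; rewrite !E; apply: Hw.
Qed.

Definition padf (B : Type) N m (d : B) (f : {ffun 'I_N -> B}) : {ffun 'I_m -> B} :=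
  [ffun j => match (insub (nat_of_ord j) : option 'I_N) with Some j' => f j' | None => d end].
Definition truncf (B : Type) N m (h : N <= m) (f : {ffun 'I_m -> B}) : {ffun 'I_N -> B} :=
  [ffun j => f (widen_ord h j)].
Arguments padf {B N m} d f.
Arguments truncf {B N m} h f.

Lemma insub_lt N m (j : 'I_m) : j < N -> exists j' : 'I_N,
  (insub (nat_of_ord j) : option 'I_N) = Some j' /\ nat_of_ord j' = nat_of_ord j.
Proof. by move=> h; exists (Ordinal h); rewrite insubT. Qed.
Lemma insub_ge N m (j : 'I_m) : N <= j -> (insub (nat_of_ord j) : option 'I_N) = None.
Proof. by move=> h; rewrite insubN // -leqNgt. Qed.

Lemma pad_trunc (B : Type) N m (h : N <= m) (d : B) (f : {ffun 'I_m -> B}) :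
  (forall j : 'I_m, N <= j -> f j = d) -> padf d (truncf h f) = f.
Proof.
move=> H; apply/ffunP => j; rewrite !ffunE.
case: (ltnP j N) => hj.
  have [j' [-> e]] := insub_lt hj; rewrite ffunE.
  by rewrite (_ : widen_ord h j' = j) //; apply: val_inj.
by rewrite insub_ge // H.
Qed.

Lemma HJP (L X C : finType) (l0 : L) : exists N, forall m, N <= m ->
  forall chi : X -> word L m -> C, exists w : vword L m, isvar w /\
   (forall j : 'I_m, N <= j -> w j = Some l0) /\
   forall x a a', chi x (subw w a) = chi x (subw w a').
Proof.
have [N HN] := HJ_fin L {ffun X -> C}.
exists N => m hm chi.
pose chi' (u : word L N) : {ffun X -> C} := [ffun x => chi x (padf l0 u)].
have [w [[j hj] Hw]] := HN chi'.
exists (padf (Some l0) w); split.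
  exists (widen_ord hm j); rewrite ffunE.
  have [j' [-> e]] := insub_lt (m:=m) (j := widen_ord hm j) (ltn_ord j).
  by rewrite -hj (_ : j' = j) //; apply: val_inj.
split.
  by move=> i hi; rewrite ffunE insub_ge.
have E : forall a, subw (padf (Some l0) w : vword L m) a = padf l0 (subw w a).
  by move=> a; apply/ffunP => i; rewrite !ffunE; case: insub => // i'; rewrite ffunE.
move=> x a a'; rewrite !E.
have := congr1 (fun F : {ffun X -> C} => F x) (Hw a a').
by rewrite /= !ffunE.
Qed.


Definition ext (B : Type) T (f : 'I_T -> B) (b : B) : 'I_T.+1 -> B :=
  fun s => match (insub (nat_of_ord s) : option 'I_T) with Some s' => f s' | None => b end.

Lemma ext_widen (B : Type) T (f : 'I_T -> B) b s : ext f b (widen_ord (leqnSn T) s) = f s.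
Proof.
rewrite /ext; have [s' [-> e]] := insub_lt (N := T) (j := widen_ord (leqnSn T) s) (ltn_ord s).
by rewrite (_ : s' = s) //; apply: val_inj.
Qed.
Lemma ext_max (B : Type) T (f : 'I_T -> B) b : ext f b ord_max = b.
Proof. by rewrite /ext insub_ge. Qed.
Lemma widen_or_max T (s : 'I_T.+1) : s = ord_max \/ exists s', s = widen_ord (leqnSn T) s'.
Proof.
case: (ltnP s T) => h; first by right; exists (Ordinal h); apply: val_inj.
left; apply: val_inj => /=; have := ltn_ord s; lia.
Qed.
Lemma ext_lt (B : Type) T (f : 'I_T -> B) b b' (s : 'I_T.+1) : s < T -> ext f b s = ext f b' s.
Proof. by move=> h; rewrite /ext; have [s' [-> _]] := insub_lt h. Qed.

Definition Gprop (L : finType) (l0 : L) T :=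
 forall C : finType, exists N, forall m, N <= m ->
  forall (K : 'I_T -> vword L m -> ('I_T -> word L m) -> C) (Q : ('I_T -> word L m) -> C),
  (forall (t : 'I_T) v U U', (forall s : 'I_T, s < t -> U s = U' s) -> K t v U = K t v U') ->
  exists v : 'I_T -> vword L m, (forall t, isvar (v t)) /\
   (forall t (j : 'I_m), N <= j -> v t j = Some l0) /\
   forall a a' : 'I_T -> L,
     Q (fun s => subw (v s) (a s)) = Q (fun s => subw (v s) (a' s)) /\
     forall t, K t (v t) (fun s => subw (v s) (a s)) = K t (v t) (fun s => subw (v s) (a' s)).

Lemma Gthm (L : finType) (l0 : L) T : Gprop l0 T.
Proof.
elim: T => [|T IH] C.
  exists 0 => m _ K Q _; exists (fun _ => [ffun _ => None]); split; first by case.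
  split; first by case.
  move=> a a'; split; last by case.
  by congr Q; apply: functional_extensionality; case.
have [N1 HN1] := IH (C * C)%type.
pose X := {ffun 'I_T -> {ffun 'I_N1 -> L}}.
have [N2 HN2] := HJP X C l0.
exists (maxn N1 N2) => m hm K Q Kloc.
have h1 : N1 <= m by apply: leq_trans hm; apply: leq_maxl.
have h2 : N2 <= m by apply: leq_trans hm; apply: leq_maxr.
pose wd := widen_ord (leqnSn T).
pose chi (x : X) (u : word L m) := Q (ext (fun s => padf l0 (x s) : word L m) u).
have [w [varw [cw Hw]]] := HN2 m h2 chi.
pose K' (t : 'I_T) v U' := (K (wd t) v (ext U' (subw w l0)), K (wd t) v (ext U' (subw w l0))).
pose Q' U' := (Q (ext U' (subw w l0)), K ord_max w (ext U' (subw w l0))).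
have K'loc : forall (t : 'I_T) v U U', (forall s : 'I_T, s < t -> U s = U' s) -> K' t v U = K' t v U'.
  move=> t v U U' H; rewrite /K' (Kloc (wd t) v (ext U (subw w l0)) (ext U' (subw w l0))) // => s hs.
  have hsT : s < T by have := ltn_ord t; move: hs; rewrite /=; lia.
  rewrite /ext; have [s' [-> e]] := insub_lt hsT; apply: H; by rewrite e.
have [v' [varv' [cv' Hv']]] := HN1 m h1 K' Q' K'loc.
exists (ext v' w); split.
  by move=> t; case: (widen_or_max t) => [->|[s ->]]; rewrite ?ext_max ?ext_widen.
split.
  move=> t j hj; case: (widen_or_max t) => [->|[s ->]]; rewrite ?ext_max ?ext_widen.
    by apply: cw; apply: leq_trans hj; apply: leq_maxr.
  by apply: cv'; apply: leq_trans hj; apply: leq_maxl.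
pose U'a (a : 'I_T.+1 -> L) := fun s => subw (v' s) (a (wd s)).
have Esub : forall a : 'I_T.+1 -> L, (fun s => subw (ext v' w s) (a s)) =
    ext (U'a a) (subw w (a ord_max)).
  move=> a; apply: functional_extensionality => s.
  by case: (widen_or_max s) => [->|[s' ->]]; rewrite ?ext_max ?ext_widen.
have Qeq : forall a u, Q (ext (U'a a) (subw w u)) = (Q' (U'a a)).1.
  move=> a u; pose x : X := [ffun s => truncf h1 (U'a a s)].
  have Ex : forall u', ext (fun s => padf l0 (x s) : word L m) u' = ext (U'a a) u'.
    move=> u'; apply: functional_extensionality => s.
    case: (widen_or_max s) => [->|[s' ->]]; rewrite ?ext_max ?ext_widen //.
    rewrite ffunE pad_trunc // => j hj; by rewrite ffunE cv'.
  rewrite /= -!Ex; exact: (Hw x u l0).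
move=> a a'; rewrite !Esub; split.
  rewrite !Qeq; by case: (Hv' (fun s => a (wd s)) (fun s => a' (wd s))) => ->.
move=> t; case: (widen_or_max t) => [->|[s ->]]; rewrite ?ext_max ?ext_widen.
  have Km : forall a, K ord_max w (ext (U'a a) (subw w (a ord_max))) = (Q' (U'a a)).2.
    move=> a0; apply: Kloc => s hs; exact: ext_lt.
  rewrite !Km; by case: (Hv' (fun s => a (wd s)) (fun s => a' (wd s))) => ->.
have Ks : forall a, K (wd s) (v' s) (ext (U'a a) (subw w (a ord_max))) = (K' s (v' s) (U'a a)).1.
  move=> a0; apply: Kloc => s' hs'; apply: ext_lt; have := ltn_ord s; move: hs'; rewrite /=; lia.
rewrite !Ks; by case: (Hv' (fun s => a (wd s)) (fun s => a' (wd s))) => _ ->.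
Qed.


Section App.
Variables (b a1 l1 n : nat) (a l : 'I_n -> nat) (N : nat).
Definition RR := {dffun forall i : 'I_n, {ffun 'I_(l i) -> 'I_(a i)}}.
Definition LL := ('I_a1 * RR)%type.
Variable k0 : 'I_b.
Variable c : ('I_l1 * 'I_N) * {ffun 'I_a1 + ('I_l1 * 'I_N) -> option 'I_a1} ->
             (forall i : 'I_n, {ffun 'I_(a i) + ('I_(l i) * 'I_N) -> 'I_(a i)}) -> 'I_b.

Definition Tobj (x : 'I_l1) (j0 : 'I_N) (v : vword LL N) (U : 'I_l1.+1 -> word LL N) :
  {ffun 'I_a1 + ('I_l1 * 'I_N) -> option 'I_a1} :=
  [ffun z => if leALI z (inr (x, j0)) then
     match z with inl u => Some u
     | inr yj => if yj.1 < x then Some (U (lift ord0 yj.1) yj.2).1 else omap fst (v yj.2) end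
   else None].
Definition Robj (W : word LL N) : forall i, {ffun 'I_(a i) + ('I_(l i) * 'I_N) -> 'I_(a i)} :=
  fun i => [ffun z => match z with inl u => u | inr yj => (W yj.2).2 i yj.1 end].
Definition Kx (x : 'I_l1) (v : vword LL N) (U : 'I_l1.+1 -> word LL N) : 'I_b :=
  match [pick j | v j == None] with None => k0
  | Some j' => c ((x, [arg min_(j < j' | v j == None) (j : nat)]),
                  Tobj x [arg min_(j < j' | v j == None) (j : nat)] v U) (Robj (U ord0)) end.
Definition KK (t : 'I_l1.+1) (v : vword LL N) (U : 'I_l1.+1 -> word LL N) : 'I_b :=
  match unlift ord0 t with None => k0 | Some x => Kx x v U end.

Lemma KK_loc (t : 'I_l1.+1) v U U' : (forall s : 'I_l1.+1, s < t -> U s = U' s) ->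
  KK t v U = KK t v U'.
Proof.
move=> H; rewrite /KK; case: unliftP => [x ht|//].
have e0 : U ord0 = U' ord0 by apply: H; rewrite ht.
have eU : forall y : 'I_l1, y < x -> U (lift ord0 y) = U' (lift ord0 y).
  by move=> y hy; apply: H; rewrite ht /= /bump /=.
rewrite /Kx; case: pickP => // j' _.
set j0 := [arg min_(j < j' | v j == None) (j : nat)].
have -> : Tobj x j0 v U = Tobj x j0 v U'.
  apply/ffunP => z; rewrite !ffunE; case: ifP => // _; case: z => // [[y j]] /=.
  by case: ifP => // hy; rewrite eU.
by rewrite e0.
Qed.
End App.

Unset Implicit Arguments.
Theorem lemma4p9 (b : nat) (hb : (0 < b)%N)
  (a1 l1 : nat) (ha1 : (0 < a1)%N)
  (n : nat) (a l : 'I_n -> nat) (ha : forall i, (0 < a i)%N) :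
  exists m : nat,
  forall c : ('I_l1 * 'I_m) * {ffun 'I_a1 + ('I_l1 * 'I_m) -> option 'I_a1} ->
             (forall i : 'I_n, {ffun 'I_(a i) + ('I_(l i) * 'I_m) -> 'I_(a i)}) -> 'I_b,
  exists (p1 : {ffun 'I_a1 + ('I_l1 * 'I_m) -> 'I_a1 + 'I_l1})
         (p : forall i : 'I_n, {ffun 'I_(a i) + ('I_(l i) * 'I_m) -> 'I_(a i) + 'I_(l i)}),
    propP p1 /\ (forall i, propP (p i)) /\
    forall x : 'I_l1, exists k : 'I_b,
    forall y0 : 'I_l1 * 'I_m, is_min_preimage p1 x y0 ->
    forall r1 : {ffun 'I_a1 + 'I_l1 -> option 'I_a1}, sealed_L x r1 ->
    forall r : (forall i : 'I_n, {ffun 'I_(a i) + 'I_(l i) -> 'I_(a i)}),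
      (forall i, rigid (r i)) ->
      c (y0, trunc y0 (fun z => r1 (p1 z))) (fun i => [ffun z => r i (p i z)]) = k.
Proof.
pose rho0 : RR a l := [ffun i => [ffun _ => Ordinal (ha i)]].
pose l0 : LL a1 a l := (Ordinal ha1, rho0).
pose k0 : 'I_b := Ordinal hb.
have [N HN] := Gthm l0 l1.+1 'I_b.
exists N => c.
have [v [varv [_ Hv]]] := HN N (leqnn N) (KK k0 c) (fun _ => k0) (@KK_loc _ _ _ _ _ _ _ k0 c).
pose p1 : {ffun 'I_a1 + ('I_l1 * 'I_N) -> 'I_a1 + 'I_l1} :=
  [ffun z => match z with inl u => inl u
    | inr yj => match v (lift ord0 yj.1) yj.2 with None => inr yj.1 | Some q => inl q.1 end end].
pose p : forall i : 'I_n, {ffun 'I_(a i) + ('I_(l i) * 'I_N) -> 'I_(a i) + 'I_(l i)} :=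
  fun i => [ffun z => match z with inl u => inl u
    | inr yj => match v ord0 yj.2 with None => inr yj.1 | Some q => inl (q.2 i yj.1) end end].
exists p1, p; split.
  split; first by move=> u; rewrite ffunE.
  move=> x; split.
    by case: (varv (lift ord0 x)) => j hj; exists j; rewrite ffunE /= hj.
  by move=> i; rewrite ffunE /=; case: (v _ i) => //=.
split.
  move=> i; split; first by move=> u; rewrite ffunE.
  move=> x; split.
    by case: (varv ord0) => j hj; exists j; rewrite ffunE /= hj.
  by move=> j; rewrite ffunE /=; case: (v _ j) => //=.
move=> x; exists (KK k0 c (lift ord0 x) (v (lift ord0 x)) (fun s => subw (v s) l0)).
move=> [y j] [hp hmin] r1 [r1A [r1x r1lt]] r rr.
pose rho : RR a l := [ffun i => [ffun y => r i (inr y)]].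
pose sig (y : 'I_l1) : 'I_a1 := odflt (Ordinal ha1) (r1 (inr y)).
pose aa (t : 'I_l1.+1) : LL a1 a l :=
  match unlift ord0 t with None => (Ordinal ha1, rho) | Some y => (sig y, rho0) end.
case: (Hv aa (fun _ => l0)) => _ <-.
move: hp hmin; rewrite ffunE /=; case E: (v (lift ord0 y) j) => [q|] // [eyx] hmin.
subst y.
rewrite /KK liftK /Kx.
case: pickP => [j' hj' | hnone]; last by have := hnone j; rewrite E.
case: arg_minnP => [//|j0 hj0 hmin0].
have ej : j = j0.
  apply: val_inj; apply/eqP; rewrite eqn_leq (hmin0 j) ?E // andbT.
  have := hmin (inr (x, j0)); rewrite ffunE /= (eqP hj0) => /(_ erefl).
  by rewrite /leALI /= /lex_le /= ltnn eqxx.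
subst j0.
f_equal; [f_equal|].
  apply/ffunP => z; rewrite !ffunE; case: ifP => // hz.
  case: z hz => [u|[y i]] hz /=; first by rewrite r1A.
  rewrite /=; case: (ltnP y x) => hyx.
    rewrite ?ffunE /aa liftK /=; case: (v (lift ord0 y) i) => [q|] /=; first by rewrite r1A.
    rewrite /sig; case e: (r1 (inr y)) => [w|] //=; exfalso; exact: (r1lt y hyx e).
  move: hz; rewrite /leALI /= /lex_le /= ltnNge hyx /= => /andP [/eqP eyx _]; subst y.
  by case: (v (lift ord0 x) i) => [q|] /=; [rewrite r1A | rewrite r1x].
apply: functional_extensionality_dep => i; apply/ffunP => z; rewrite !ffunE.
case: z => [u|[y i']] /=; first by rewrite rr.
rewrite ffunE /aa unlift_none /=; case: (v ord0 i') => [q|] /=; first by rewrite rr.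
by rewrite /rho !ffunE.
Qed.
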